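(* In the linear setting of the context, suppose $f(\phi_{\min})<0$. Then for every $A>0$ and every $Q_A\in\mathbb R$, setting $z=Q_A/A$, the linear pump-leak system has a unique steady state $(\mathbf c^*,v^*,\phi^* )$; the map $(A,Q_A)\mapsto v^*$ is $C^1$ on $(0,\infty)\times\mathbb R$ and $$\frac{\partial v^*}{\partial A}=\Big(\big(\tfrac{Q_A}{v^*}\big)^2+f''(\phi^* )\tfrac{A}{v^*}\Big)^{-1}f''(\phi^* )>0,\qquad \frac{\partial v^*}{\partial Q_A}=\Big(\big(\tfrac{Q_A}{v^*}\big)^2+f''(\phi^* )\tfrac{A}{v^*}\Big)^{-1}\frac{Q_A}{v^*}.$$
   Context: Fix an integer $N\ge2$, real valences $z_1,\dots,z_N$ not all zero, positive constants $c_1^{\rm e},\dots,c_N^{\rm e}$ with $\sum_kz_kc_k^{\rm e}=0$. Let $L$ be a real symmetric positive definite $N\times N$ matrix, $\mathbf p\in\mathbb R^N$ constant, $\zeta>0$, $\mathbf q=L^{-1}\mathbf p$, and $f(\phi)=\sum_k c_k^{\rm e}(\exp(-q_k-z_k\phi)-1)$, which has a unique minimizer $\phi_{\min}$ on $\mathbb R$. For $A>0$ and real $z$, and $\mathbf c\in(0,\infty)^N$, $v>0$, $\phi\in\mathbb R$, set $\mu_k=\ln(c_k/c_k^{\rm e})+z_k\phi$, $\pi_{\rm w}=\sum_kc_k^{\rm e}-(\sum_kc_k+A/v)$. The linear pump-leak system is $\frac{d}{dt}(v\mathbf c)=-L\boldsymbol\mu-\mathbf p$, $0=\sum_kz_kc_k+zA/v$,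 $\frac{dv}{dt}=-\zeta\pi_{\rm w}$; a steady state is a point $(\mathbf c,v,\phi)\in(0,\infty)^N\times(0,\infty)\times\mathbb R$ with $\sum_kz_kc_k+zA/v=0$, $L\boldsymbol\mu+\mathbf p=0$, $\pi_{\rm w}=0$. *)

(* Defs.v *)
(* classical reals. Vectors in R^N are functions nat -> R,
   only their values at indices 0..N-1 matter; matrices are nat -> nat -> R. *)
From Stdlib Require Import Reals Lra Lia.
Open Scope R_scope.

Fixpoint sumN (n : nat) (g : nat -> R) : R :=
  match n with
  | O => 0
  | S m => sumN m g + g m
  end.

Definition fpot (N : nat) (z ce q : nat -> R) (phi : R) : R :=
  sumN N (fun k => ce k * (exp (- q k - z k * phi) - 1)).

(* f''(phi) = sum_k ce_k z_k^2 exp(-q_k - z_k phi)  (explicit second derivative of fpot) *)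
Definition fpot2 (N : nat) (z ce q : nat -> R) (phi : R) : R :=
  sumN N (fun k => ce k * (z k)^2 * exp (- q k - z k * phi)).

Definition mu (z ce c : nat -> R) (phi : R) (k : nat) : R :=
  ln (c k / ce k) + z k * phi.

Definition piw (N : nat) (ce c : nat -> R) (A v : R) : R :=
  sumN N ce - (sumN N c + A / v).

(* steady state of the linear pump-leak system with parameters A, z (impermeant) *)
Definition steady_state (N : nat) (z ce : nat -> R) (L : nat -> nat -> R)
    (p : nat -> R) (A zA : R) (c : nat -> R) (v phi : R) : Prop :=
  (forall k, (k < N)%nat -> 0 < c k) /\ 0 < v /\
  sumN N (fun k => z k * c k) + zA * A / v = 0 /\
  (forall i, (i < N)%nat -> sumN N (fun j => L i j * mu z ce c phi j) + p i = 0) /\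
  piw N ce c A v = 0.

Definition continuous2_at (g : R -> R -> R) (a b : R) : Prop :=
  forall eps, 0 < eps -> exists delta, 0 < delta /\
    forall a' b', Rabs (a' - a) < delta -> Rabs (b' - b) < delta ->
      Rabs (g a' b' - g a b) < eps.

(* Main.v *)
Require Import Defs.
From Stdlib Require Import Reals Ranalysis5 Lra Lia Psatz ClassicalEpsilon.
Open Scope R_scope.

Lemma sumN_ext n g h : (forall k, (k < n)%nat -> g k = h k) -> sumN n g = sumN n h.
Proof. induction n; simpl; intros H; auto. rewrite IHn, H; auto. Qed.

Lemma sumN_plus n g h : sumN n (fun k => g k + h k) = sumN n g + sumN n h.
Proof. induction n; simpl; [lra|rewrite IHn; lra]. Qed.

Lemma sumN_scal n c g : sumN n (fun k => c * g k) = c * sumN n g.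
Proof. induction n; simpl; [lra|rewrite IHn; lra]. Qed.

Lemma sumN_opp n g : sumN n (fun k => - g k) = - sumN n g.
Proof. induction n; simpl; [lra|rewrite IHn; lra]. Qed.

Lemma sumN_nonneg n g : (forall k, (k < n)%nat -> 0 <= g k) -> 0 <= sumN n g.
Proof. induction n; simpl; intros H; [lra|]. assert (0 <= g n) by auto. assert (0 <= sumN n g) by auto. lra. Qed.

Lemma sumN_ge_term n g k0 : (forall k, (k < n)%nat -> 0 <= g k) -> (k0 < n)%nat -> g k0 <= sumN n g.
Proof. induction n; simpl; intros H Hk; [lia|].
  destruct (Nat.eq_dec k0 n) as [->|Hne].
  - assert (0 <= sumN n g) by (apply sumN_nonneg; auto). lra.
  - assert (g k0 <= sumN n g) by (apply IHn; auto; lia). assert (0 <= g n) by auto. lra. Qed.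

Lemma sumN_zero n g : (forall k, (k < n)%nat -> 0 <= g k) -> sumN n g = 0 -> forall k, (k < n)%nat -> g k = 0.
Proof. intros H Hs k Hk. assert (g k <= sumN n g) by (apply sumN_ge_term; auto).
  assert (0 <= g k) by auto. lra. Qed.

Lemma sumN_deriv n (g g' : nat -> R -> R) x :
  (forall k, (k < n)%nat -> derivable_pt_lim (g k) x (g' k x)) ->
  derivable_pt_lim (fun y => sumN n (fun k => g k y)) x (sumN n (fun k => g' k x)).
Proof. induction n; simpl; intros H.
  - apply (derivable_pt_lim_const 0).
  - apply (derivable_pt_lim_plus (fun y => sumN n (fun k => g k y)) (g n)); auto. Qed.

Lemma dlim_ext f g x l : (forall y, f y = g y) -> derivable_pt_lim f x l -> derivable_pt_lim g x l.
Proof. intros H D eps He. destruct (D eps He) as [d Hd]. exists d. intros h H1 H2.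
  rewrite <- !H. auto. Qed.
Lemma incr_of_deriv g g' x y : x < y ->
  (forall c, x <= c <= y -> derivable_pt_lim g c (g' c)) ->
  (forall c, x < c < y -> 0 < g' c) -> g x < g y.
Proof. intros Hxy D P. destruct (MVT_cor2 g g' x y Hxy D) as [c [E Hc]].
  assert (0 < g' c) by auto. assert (0 < g' c * (y - x)) by (apply Rmult_lt_0_compat; lra). lra. Qed.


Lemma F1_incr (F1 F2 : R -> R) (dF1 : forall x, derivable_pt_lim F1 x (F2 x))
  (pos2 : forall x, 0 < F2 x) x y : x < y -> F1 x < F1 y.
Proof. intros H. apply (incr_of_deriv F1 F2); auto. Qed.

Lemma convex_neg (F F1 F2 : R -> R) (dF : forall x, derivable_pt_lim F x (F1 x))
  (dF1 : forall x, derivable_pt_lim F1 x (F2 x)) (pos2 : forall x, 0 < F2 x) x t y :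
  x < t < y -> F x <= 0 -> F y <= 0 -> (F x < 0 \/ F y < 0) -> F t < 0.
Proof. intros [H1 H2] Hx Hy Hs. destruct (Rlt_or_le (F t) 0) as [|Ht]; auto. exfalso.
  destruct (MVT_cor2 F F1 x t H1 (fun c _ => dF c)) as [c1 [E1 Hc1]].
  destruct (MVT_cor2 F F1 t y H2 (fun c _ => dF c)) as [c2 [E2 Hc2]].
  assert (F1 c1 < F1 c2) by (apply (F1_incr F1 F2); auto; lra).
  destruct Hs as [Hs|Hs].
  - assert (0 < F1 c1 * (t - x)) by lra.
    assert (0 < F1 c1) by nra.
    assert (0 < F1 c2 * (y - t)) by (apply Rmult_lt_0_compat; lra). lra.
  - assert (F1 c2 * (y - t) < 0) by lra.
    assert (F1 c2 < 0) by nra. nra. Qed.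

Lemma cont_of_dlim f f' : (forall x, derivable_pt_lim f x (f' x)) -> continuity f.
Proof. intros D x. apply derivable_continuous_pt. exists (f' x). apply D. Qed.

Lemma cont_eps f x : continuity_pt f x -> forall eps, 0 < eps ->
  exists d, 0 < d /\ forall y, Rabs (y - x) < d -> Rabs (f y - f x) < eps.
Proof. intros C eps He. destruct (C eps He) as [d [Hd H]]. exists d; split; auto.
  intros y Hy. destruct (Req_dec y x) as [->|Hne].
  - unfold Rminus; rewrite Rplus_opp_r, Rabs_R0; auto.
  - apply (H y). split; [split; [exact I|auto]|]. exact Hy. Qed.

Lemma abs_prod_bound z e eps d : 0 < eps -> eps * (Rabs z + 1) = d -> Rabs e < eps -> - d < z * e < d.
Proof. intros He Hd Hab.
  assert (Rabs (z * e) <= Rabs z * eps) by (rewrite Rabs_mult; apply Rmult_le_compat_l; [apply Rabs_pos|lra]).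
  assert (Rabs z * eps < d) by nra.
  pose proof (Rle_abs (z*e)). pose proof (Rle_abs (-(z*e))). rewrite Rabs_Ropp in *. lra. Qed.

Lemma exists_sol (F F1 F2 : R -> R) (dF : forall x, derivable_pt_lim F x (F1 x))
  (dF1 : forall x, derivable_pt_lim F1 x (F2 x)) (pos2 : forall x, 0 < F2 x)
  m x0 M (Hm : m < x0) (HM : x0 < M) (Fm : 0 < F m) (Fx0 : F x0 < 0) (FM : 0 < F M) :
  forall z, exists phi, F phi < 0 /\ F1 phi + z * F phi = 0.
Proof. intros z.
  assert (CF : continuity F) by (apply (cont_of_dlim F F1); auto).
  assert (CF1 : continuity F1) by (apply (cont_of_dlim F1 F2); auto).
  destruct (IVT F x0 M CF HM Fx0 FM) as [b [Hb Fb]].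
  destruct (IVT (fun t => - F t) m x0 (continuity_opp F CF) Hm ltac:(lra) ltac:(lra)) as [a [Ha Fa]].
  assert (b <> x0) by (intro; subst; lra). assert (a <> x0) by (intro; subst; lra).
  destruct (MVT_cor2 F F1 x0 b ltac:(lra) (fun c _ => dF c)) as [c [Ec Hc]].
  destruct (MVT_cor2 F F1 a x0 ltac:(lra) (fun c _ => dF c)) as [c' [Ec' Hc']].
  assert (P1 : 0 < F1 c) by nra. assert (P2 : F1 c' < 0) by nra.
  set (eps := F1 c / (Rabs z + 1)). assert (0 < Rabs z + 1) by (pose proof (Rabs_pos z); lra).
  assert (Heps : 0 < eps) by (apply Rdiv_lt_0_compat; lra).
  assert (Eeps : eps * (Rabs z + 1) = F1 c) by (unfold eps; field; lra).
  set (eps' := - F1 c' / (Rabs z + 1)).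
  assert (Heps' : 0 < eps') by (apply Rdiv_lt_0_compat; lra).
  assert (Eeps' : eps' * (Rabs z + 1) = - F1 c') by (unfold eps'; field; lra).
  destruct (cont_eps F b (CF b) eps Heps) as [d [Hd Hdb]].
  destruct (cont_eps F a (CF a) eps' Heps') as [d' [Hd' Hda]].
  set (pR := b - Rmin d (b - c) / 2).
  assert (Hmin1 : 0 < Rmin d (b - c)) by (apply Rmin_glb_lt; lra).
  pose proof (Rmin_l d (b - c)). pose proof (Rmin_r d (b - c)).
  assert (c < pR < b) by (unfold pR; lra).
  assert (AR : Rabs (F pR) < eps).
  { replace (F pR) with (F pR - F b) by lra. apply Hdb. rewrite Rabs_left; unfold pR; lra. }
  set (pL := a + Rmin d' (c' - a) / 2).
  assert (Hmin2 : 0 < Rmin d' (c' - a)) by (apply Rmin_glb_lt; lra).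
  pose proof (Rmin_l d' (c' - a)). pose proof (Rmin_r d' (c' - a)).
  assert (a < pL < c') by (unfold pL; lra).
  assert (AL : Rabs (F pL) < eps').
  { replace (F pL) with (F pL - F a) by lra. apply Hda. rewrite Rabs_right; unfold pL; lra. }
  assert (kR : 0 < F1 pR + z * F pR).
  { pose proof (abs_prod_bound z (F pR) eps (F1 c) Heps Eeps AR).
    assert (F1 c < F1 pR) by (apply (F1_incr F1 F2); auto; lra). lra. }
  assert (kL : F1 pL + z * F pL < 0).
  { pose proof (abs_prod_bound z (F pL) eps' (- F1 c') Heps' Eeps' AL).
    assert (F1 pL < F1 c') by (apply (F1_incr F1 F2); auto; lra). lra. }
  assert (Ck : continuity (fun t => F1 t + z * F t)).
  { apply (cont_of_dlim _ (fun t => F2 t + z * F1 t)). intro x.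
    apply (derivable_pt_lim_plus F1 (fun t => z * F t)); auto.
    apply (derivable_pt_lim_scal F z x (F1 x)); auto. }
  destruct (IVT (fun t => F1 t + z * F t) pL pR Ck ltac:(lra) kL kR) as [phi [Hp Ep]].
  exists phi. split; auto.
  destruct (Rtotal_order phi x0) as [Hl|[He|Hg]].
  - apply (convex_neg F F1 F2 dF dF1 pos2 a phi x0); lra.
  - subst; auto.
  - apply (convex_neg F F1 F2 dF dF1 pos2 x0 phi b); lra.
Qed.

Lemma dH (F F1 F2 : R -> R) (dF : forall x, derivable_pt_lim F x (F1 x))
  (dF1 : forall x, derivable_pt_lim F1 x (F2 x)) t : F t <> 0 ->
  derivable_pt_lim (fun s => F1 s / - F s) t ((F2 t * (- F t) + F1 t * F1 t) / (F t * F t)).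
Proof. intros Hn.
  pose proof (derivable_pt_lim_div F1 (fun s => - F s) t (F2 t) (- F1 t) (dF1 t)
     (derivable_pt_lim_opp F t (F1 t) (dF t)) ltac:(intro; apply Hn; lra)) as D.
  replace ((F2 t * (- F t) + F1 t * F1 t) / (F t * F t)) with
     ((F2 t * (fun s => - F s) t - - F1 t * F1 t) / (((fun s => - F s) t))²)
   by (unfold Rsqr; field; auto). exact D. Qed.

Lemma neg_seg (F F1 F2 : R -> R) (dF : forall x, derivable_pt_lim F x (F1 x))
  (dF1 : forall x, derivable_pt_lim F1 x (F2 x)) (pos2 : forall x, 0 < F2 x) x y t :
  F x < 0 -> F y < 0 -> x <= t <= y -> F t < 0.
Proof. intros Hx Hy [H1 H2]. destruct H1 as [H1|<-]; auto. destruct H2 as [H2| ->]; auto.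
  apply (convex_neg F F1 F2 dF dF1 pos2 x t y); lra. Qed.

Lemma H_incr (F F1 F2 : R -> R) (dF : forall x, derivable_pt_lim F x (F1 x))
  (dF1 : forall x, derivable_pt_lim F1 x (F2 x)) (pos2 : forall x, 0 < F2 x) x y :
  x < y -> F x < 0 -> F y < 0 -> F1 x / - F x < F1 y / - F y.
Proof. intros Hxy Hx Hy.
  apply (incr_of_deriv (fun s => F1 s / - F s) (fun t => (F2 t * (- F t) + F1 t * F1 t) / (F t * F t))); auto.
  - intros c Hc. apply (dH F F1 F2 dF dF1). assert (F c < 0) by (apply (neg_seg F F1 F2 dF dF1 pos2 x y); auto). lra.
  - intros c Hc. assert (F c < 0) by (apply (neg_seg F F1 F2 dF dF1 pos2 x y); auto; lra).
    pose proof (pos2 c). apply Rdiv_lt_0_compat; nra. Qed.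

Lemma H_inj (F F1 F2 : R -> R) (dF : forall x, derivable_pt_lim F x (F1 x))
  (dF1 : forall x, derivable_pt_lim F1 x (F2 x)) (pos2 : forall x, 0 < F2 x) x y :
  F x < 0 -> F y < 0 -> F1 x / - F x = F1 y / - F y -> x = y.
Proof. intros Hx Hy E. destruct (Rtotal_order x y) as [H|[H|H]]; auto.
  - pose proof (H_incr F F1 F2 dF dF1 pos2 x y H Hx Hy). lra.
  - pose proof (H_incr F F1 F2 dF dF1 pos2 y x H Hy Hx). lra. Qed.

Lemma Phi_props (F F1 F2 : R -> R) (dF : forall x, derivable_pt_lim F x (F1 x))
  (dF1 : forall x, derivable_pt_lim F1 x (F2 x)) (pos2 : forall x, 0 < F2 x)
  (Phi : R -> R) (HP : forall z, F (Phi z) < 0 /\ F1 (Phi z) / - F (Phi z) = z) :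
  (forall t, F t < 0 -> Phi (F1 t / - F t) = t) /\
  (forall y1 y2, y1 < y2 -> Phi y1 < Phi y2) /\
  (forall z, continuity_pt Phi z) /\
  (forall z, derivable_pt_lim Phi z (1 / ((F2 (Phi z) * (- F (Phi z)) + F1 (Phi z) * F1 (Phi z)) / (F (Phi z) * F (Phi z))))).
Proof.
  set (H := fun s => F1 s / - F s).
  assert (PH : forall t, F t < 0 -> Phi (H t) = t).
  { intros t Ht. destruct (HP (H t)) as [A B]. apply (H_inj F F1 F2 dF dF1 pos2); auto. }
  assert (Mono : forall y1 y2, y1 < y2 -> Phi y1 < Phi y2).
  { intros y1 y2 Hy. destruct (HP y1) as [A1 B1]. destruct (HP y2) as [A2 B2].
    destruct (Rtotal_order (Phi y1) (Phi y2)) as [h|[h|h]]; auto.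
    - rewrite h in B1. lra.
    - pose proof (H_incr F F1 F2 dF dF1 pos2 _ _ h A2 A1). lra. }
  assert (Cont : forall z, continuity_pt Phi z).
  { intros z. pose proof (Mono (z-1) z ltac:(lra)). pose proof (Mono z (z+1) ltac:(lra)).
    destruct (HP (z-1)) as [A1 B1]. destruct (HP (z+1)) as [A2 B2].
    apply (continuity_pt_recip_prelim H Phi (Phi (z-1)) (Phi (z+1)) ltac:(lra)).
    - intros x y Hx Hxy Hy. apply (H_incr F F1 F2 dF dF1 pos2); auto;
        apply (neg_seg F F1 F2 dF dF1 pos2 (Phi (z-1)) (Phi (z+1))); auto; lra.
    - intros x Hx. unfold comp, id. apply PH.
      apply (neg_seg F F1 F2 dF dF1 pos2 (Phi (z-1)) (Phi (z+1))); auto.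
    - intros a Ha. apply derivable_continuous_pt. exists ((F2 a * (- F a) + F1 a * F1 a) / (F a * F a)).
      apply (dH F F1 F2 dF dF1). assert (F a < 0) by (apply (neg_seg F F1 F2 dF dF1 pos2 (Phi (z-1)) (Phi (z+1))); auto). lra.
    - unfold H. rewrite B1, B2. lra. }
  split; [exact PH|split; [exact Mono|split; [exact Cont|]]].
  intros z.
  pose proof (Mono (z-1) z ltac:(lra)). pose proof (Mono z (z+1) ltac:(lra)).
  destruct (HP (z-1)) as [A1 B1]. destruct (HP (z+1)) as [A2 B2].
  assert (Prf : forall a, Phi (z-1) <= a <= Phi (z+1) -> derivable_pt H a).
  { intros a Ha. exists ((F2 a * (- F a) + F1 a * F1 a) / (F a * F a)).
    apply (dH F F1 F2 dF dF1). assert (F a < 0) by (apply (neg_seg F F1 F2 dF dF1 pos2 (Phi (z-1)) (Phi (z+1))); auto). lra. }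
  assert (Hi : Phi (z-1) <= Phi z <= Phi (z+1)) by lra.
  destruct (HP z) as [Az Bz].
  assert (Dz : derive_pt H (Phi z) (Prf (Phi z) Hi) = (F2 (Phi z) * (- F (Phi z)) + F1 (Phi z) * F1 (Phi z)) / (F (Phi z) * F (Phi z))).
  { apply derive_pt_eq_0. apply (dH F F1 F2 dF dF1). lra. }
  assert (Pos : 0 < (F2 (Phi z) * (- F (Phi z)) + F1 (Phi z) * F1 (Phi z)) / (F (Phi z) * F (Phi z))).
  { pose proof (pos2 (Phi z)). apply Rdiv_lt_0_compat; nra. }
  pose proof (derivable_pt_lim_recip_interv H Phi (z-1) (z+1) z Prf (Cont z) ltac:(lra) ltac:(lra) Hi) as R.
  rewrite Dz in R. apply R.
  - intros x Hx. unfold comp, id. destruct (HP x); auto.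
  - lra.
Qed.

Definition F1c (N : nat) (z ce q : nat -> R) (phi : R) : R :=
  sumN N (fun k => - (ce k * z k * exp (- q k - z k * phi))).

Lemma dexp_lin a b x : derivable_pt_lim (fun y => exp (- a - b * y)) x (- b * exp (- a - b * x)).
Proof.
  assert (D1 : derivable_pt_lim (fun y => - a - b * y) x (- b)).
  { pose proof (derivable_pt_lim_minus (fct_cte (-a)) (mult_real_fct b id) x 0 (b * 1)
      (derivable_pt_lim_const (-a) x) (derivable_pt_lim_scal id b x 1 (derivable_pt_lim_id x))) as D.
    replace (- b) with (0 - b * 1) by ring. eapply dlim_ext; [|exact D].
    intro y. unfold minus_fct, fct_cte, mult_real_fct, id. ring. }
  pose proof (derivable_pt_lim_comp _ exp x _ _ D1 (derivable_pt_lim_exp _)) as D.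
  replace (- b * exp (- a - b * x)) with (exp (- a - b * x) * - b) by ring. exact D. Qed.

Lemma dF_c N z ce q x : derivable_pt_lim (fpot N z ce q) x (F1c N z ce q x).
Proof. unfold fpot, F1c.
  apply (sumN_deriv N (fun k y => ce k * (exp (- q k - z k * y) - 1))
     (fun k x => - (ce k * z k * exp (- q k - z k * x)))).
  intros k _.
  pose proof (derivable_pt_lim_scal _ (ce k) x _
    (derivable_pt_lim_minus _ (fct_cte 1) x _ _ (dexp_lin (q k) (z k) x) (derivable_pt_lim_const 1 x))) as D.
  replace (- (ce k * z k * exp (- q k - z k * x))) with (ce k * (- z k * exp (- q k - z k * x) - 0)) by ring.
  eapply dlim_ext; [|exact D]. intro y. reflexivity. Qed.

Lemma dF1_c N z ce q x : derivable_pt_lim (F1c N z ce q) x (fpot2 N z ce q x).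
Proof. unfold fpot2, F1c.
  apply (sumN_deriv N (fun k y => - (ce k * z k * exp (- q k - z k * y)))
     (fun k x => ce k * z k ^ 2 * exp (- q k - z k * x))).
  intros k _.
  pose proof (derivable_pt_lim_scal _ (- (ce k * z k)) x _ (dexp_lin (q k) (z k) x)) as D.
  replace (ce k * z k ^ 2 * exp (- q k - z k * x)) with (- (ce k * z k) * (- z k * exp (- q k - z k * x))) by ring.
  eapply dlim_ext; [|exact D]. intro y. unfold mult_real_fct. ring. Qed.

Lemma pos2_c N z ce q (Hce : forall k, (k < N)%nat -> 0 < ce k) (Hz : exists k, (k < N)%nat /\ z k <> 0) x :
  0 < fpot2 N z ce q x.
Proof. destruct Hz as [k0 [Hk Hz]]. unfold fpot2.
  assert (Hn : forall k, (k < N)%nat -> 0 <= ce k * z k ^ 2 * exp (- q k - z k * x)).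
  { intros k Hk'. pose proof (Hce k Hk'). pose proof (exp_pos (- q k - z k * x)).
    pose proof (pow2_ge_0 (z k)). apply Rmult_le_pos; [apply Rmult_le_pos|]; lra. }
  eapply Rlt_le_trans; [|apply (sumN_ge_term _ _ k0 Hn Hk)].
  pose proof (Hce k0 Hk). pose proof (exp_pos (- q k0 - z k0 * x)).
  assert (0 < z k0 ^ 2) by (simpl; rewrite Rmult_1_r; apply Rsqr_pos_lt; auto).
  apply Rmult_lt_0_compat; [apply Rmult_lt_0_compat|]; lra. Qed.

Lemma fpot_split N z ce q x : fpot N z ce q x = sumN N (fun k => ce k * exp (- q k - z k * x)) - sumN N ce.
Proof. unfold fpot. transitivity (sumN N (fun k => ce k * exp (- q k - z k * x)) + - sumN N ce); [|ring].
  rewrite <- (sumN_opp N ce), <- sumN_plus. apply sumN_ext. intros; ring. Qed.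

Lemma Fpos_c N z ce q (Hce : forall k, (k < N)%nat -> 0 < ce k) k1 x : (k1 < N)%nat ->
  sumN N ce / ce k1 <= - q k1 - z k1 * x -> 0 < fpot N z ce q x.
Proof. intros Hk Hx. rewrite fpot_split.
  assert (Hn : forall k, (k < N)%nat -> 0 <= ce k * exp (- q k - z k * x)).
  { intros k Hk'. pose proof (Hce k Hk'). pose proof (exp_pos (- q k - z k * x)). nra. }
  pose proof (sumN_ge_term _ _ k1 Hn Hk).
  pose proof (exp_ineq1_le (- q k1 - z k1 * x)). pose proof (Hce k1 Hk).
  assert (sumN N ce = ce k1 * (sumN N ce / ce k1)) by (field; lra).
  assert (ce k1 * (sumN N ce / ce k1) <= ce k1 * (- q k1 - z k1 * x)) by (apply Rmult_le_compat_l; lra).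
  nra. Qed.

Lemma signs N z ce (Hce : forall k, (k < N)%nat -> 0 < ce k) (Hz : exists k, (k < N)%nat /\ z k <> 0)
  (Hneutral : sumN N (fun k => z k * ce k) = 0) :
  (exists k, (k < N)%nat /\ z k < 0) /\ (exists k, (k < N)%nat /\ 0 < z k).
Proof. destruct Hz as [k0 [Hk0 Hz0]]. split.
  - destruct (classic (exists k, (k < N)%nat /\ z k < 0)) as [|Hno]; auto. exfalso.
    assert (Hn : forall k, (k < N)%nat -> 0 <= z k * ce k).
    { intros k Hk. destruct (Rlt_or_le (z k) 0). - exfalso; apply Hno; eauto. - pose proof (Hce k Hk); nra. }
    pose proof (sumN_zero _ _ Hn Hneutral k0 Hk0). pose proof (Hce k0 Hk0).
    apply Hz0. nra.
  - destruct (classic (exists k, (k < N)%nat /\ 0 < z k)) as [|Hno]; auto. exfalso.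
    assert (Hn : forall k, (k < N)%nat -> 0 <= - (z k * ce k)).
    { intros k Hk. destruct (Rlt_or_le 0 (z k)). - exfalso; apply Hno; eauto. - pose proof (Hce k Hk); nra. }
    assert (sumN N (fun k => - (z k * ce k)) = 0) by (rewrite sumN_opp, Hneutral; ring).
    pose proof (sumN_zero _ _ Hn H k0 Hk0). pose proof (Hce k0 Hk0).
    apply Hz0. nra. Qed.
Lemma div_close A Q d1 : 0 < A -> 0 < d1 -> exists d, 0 < d /\ forall a b,
  Rabs (a - A) < d -> Rabs (b - Q) < d -> Rabs (b / a - Q / A) < d1.
Proof. intros HA Hd1. set (K := A + Rabs Q + 1). pose proof (Rabs_pos Q).
  assert (HK : 0 < K) by (unfold K; lra).
  set (d := Rmin (A / 2) (d1 * A * A / (2 * K))).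
  assert (Hd2 : 0 < d1 * A * A / (2 * K)) by (apply Rdiv_lt_0_compat; [apply Rmult_lt_0_compat; [apply Rmult_lt_0_compat|]|]; lra).
  exists d. split; [apply Rmin_glb_lt; lra|].
  intros a b Ha Hb. pose proof (Rmin_l (A/2) (d1 * A * A / (2 * K))). pose proof (Rmin_r (A/2) (d1 * A * A / (2 * K))).
  fold d in H0, H1.
  apply Rabs_def2 in Ha. 
  assert (Hapos : A / 2 < a) by lra.
  assert (E : b / a - Q / A = ((b - Q) * A - Q * (a - A)) / (a * A)) by (field; lra).
  rewrite E. unfold Rdiv at 1. rewrite Rabs_mult, Rabs_inv. rewrite (Rabs_right (a * A)) by nra. fold (Rdiv (Rabs ((b - Q) * A - Q * (a - A))) (a * A)).
  assert (T : Rabs ((b - Q) * A - Q * (a - A)) <= Rabs (b - Q) * A + Rabs Q * Rabs (a - A)).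
  { unfold Rminus at 1. eapply Rle_trans; [apply Rabs_triang|]. rewrite Rabs_Ropp, !Rabs_mult, (Rabs_right A) by lra.
    lra. }
  assert (Ha' : Rabs (a - A) < d) by (apply Rabs_def1; lra).
  assert (T2 : Rabs (b - Q) * A + Rabs Q * Rabs (a - A) <= d * (A + Rabs Q)).
  { pose proof (Rabs_pos (a - A)). nra. }
  assert (T3 : d * (A + Rabs Q) < d1 * A * A / 2).
  { assert (d * K <= d1 * A * A / 2).
    { apply (Rmult_le_reg_r (/ K)). apply Rinv_0_lt_compat; lra.
      replace (d * K * / K) with d by (field; lra). replace (d1 * A * A / 2 * / K) with (d1 * A * A / (2 * K)) by (field; lra). lra. }
    assert (0 < d) by (apply Rmin_glb_lt; lra). unfold K in H2. idtac. nra. }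
  apply (Rmult_lt_reg_r (a * A)). nra.
  replace (Rabs ((b - Q) * A - Q * (a - A)) / (a * A) * (a * A)) with (Rabs ((b - Q) * A - Q * (a - A))) by (field; nra).
  assert (0 < d1 * (a - A / 2) * A) by (apply Rmult_lt_0_compat; [apply Rmult_lt_0_compat|]; lra).
  lra. Qed.

Lemma cont2_comp (k : R -> R) A Q : 0 < A -> continuity_pt k (Q / A) ->
  continuous2_at (fun a b => k (b / a)) A Q.
Proof. intros HA C eps He. destruct (cont_eps k _ C eps He) as [d1 [Hd1 H1]].
  destruct (div_close A Q d1 HA Hd1) as [d [Hd H2]]. exists d. split; auto.
  Qed.
Lemma d_K_over g x l K : derivable_pt_lim g x l -> g x <> 0 ->
  derivable_pt_lim (fun y => K / - g y) x (K * l / (g x * g x)).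
Proof. intros D Hn.
  pose proof (derivable_pt_lim_div (fct_cte K) (fun y => - g y) x 0 (- l) (derivable_pt_lim_const K x)
    (derivable_pt_lim_opp g x l D) ltac:(intro; apply Hn; lra)) as D2.
  replace (K * l / (g x * g x)) with ((0 * (fun y => - g y) x - - l * fct_cte K x) / ((fun y => - g y) x)²)
    by (unfold fct_cte, Rsqr; field; auto).
  eapply dlim_ext; [|exact D2]. intro y. reflexivity. Qed.

Lemma d_id_over g x l : derivable_pt_lim g x l -> g x <> 0 ->
  derivable_pt_lim (fun y => y / - g y) x ((- g x + x * l) / (g x * g x)).
Proof. intros D Hn.
  pose proof (derivable_pt_lim_div id (fun y => - g y) x 1 (- l) (derivable_pt_lim_id x)
    (derivable_pt_lim_opp g x l D) ltac:(intro; apply Hn; lra)) as D2.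
  replace ((- g x + x * l) / (g x * g x)) with ((1 * (fun y => - g y) x - - l * id x) / ((fun y => - g y) x)²)
    by (unfold id, Rsqr; field; auto).
  eapply dlim_ext; [|exact D2]. intro y. reflexivity. Qed.

Lemma d_over_A A x : A <> 0 -> derivable_pt_lim (fun b => b / A) x (/ A).
Proof. intros HA. pose proof (derivable_pt_lim_scal id (/ A) x 1 (derivable_pt_lim_id x)) as D.
  replace (/ A) with (/ A * 1) by ring. eapply dlim_ext; [|exact D]. intro y. unfold mult_real_fct, id. field. auto. Qed.

Lemma d_Q_over Q x : x <> 0 -> derivable_pt_lim (fun a => Q / a) x (- Q / (x * x)).
Proof. intros Hx. pose proof (derivable_pt_lim_div (fct_cte Q) id x 0 1 (derivable_pt_lim_const Q x)
   (derivable_pt_lim_id x) Hx) as D.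
  replace (- Q / (x * x)) with ((0 * id x - 1 * fct_cte Q x) / (id x)²) by (unfold id, fct_cte, Rsqr; field; auto).
  eapply dlim_ext; [|exact D]. intro y. reflexivity. Qed.

Lemma d_comp2 (u G : R -> R) x l1 l2 : derivable_pt_lim u x l1 -> derivable_pt_lim G (u x) l2 ->
  derivable_pt_lim (fun y => G (u y)) x (l2 * l1).
Proof. intros D1 D2. exact (derivable_pt_lim_comp u G x l1 l2 D1 D2). Qed.

Lemma test_cont (F1 F2 F : R -> R) t : continuity_pt F1 t -> continuity_pt F2 t -> continuity_pt F t ->
  F1 t * F1 t - F2 t * F t <> 0 ->
  continuity_pt (fun s => F2 s / (F1 s * F1 s - F2 s * F s)) t.
Proof. intros C1 C2 C H. apply continuity_pt_div; auto.
  apply continuity_pt_minus; apply continuity_pt_mult; auto. Qed.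

Lemma dF2_c N z ce q x : derivable_pt_lim (fpot2 N z ce q) x
   (sumN N (fun k => ce k * z k ^ 2 * (- z k * exp (- q k - z k * x)))).
Proof. unfold fpot2.
  apply (sumN_deriv N (fun k y => ce k * z k ^ 2 * exp (- q k - z k * y))
     (fun k x => ce k * z k ^ 2 * (- z k * exp (- q k - z k * x)))).
  intros k _.
  pose proof (derivable_pt_lim_scal _ (ce k * z k ^ 2) x _ (dexp_lin (q k) (z k) x)) as D.
  eapply dlim_ext; [|exact D]. intro y. reflexivity. Qed.
Theorem mainTheorem3
  (N : nat) (z ce : nat -> R) (L : nat -> nat -> R) (p q : nat -> R) (zeta : R)
  (phimin : R)
  (HN : (2 <= N)%nat)
  (Hz : exists k, (k < N)%nat /\ z k <> 0)
  (Hce : forall k, (k < N)%nat -> 0 < ce k)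
  (Hneutral : sumN N (fun k => z k * ce k) = 0)
  (HLsym : forall i j, (i < N)%nat -> (j < N)%nat -> L i j = L j i)
  (HLpd : forall x : nat -> R, (exists i, (i < N)%nat /\ x i <> 0) ->
            0 < sumN N (fun i => sumN N (fun j => x i * L i j * x j)))
  (Hzeta : 0 < zeta)
  (Hq : forall i, (i < N)%nat -> sumN N (fun j => L i j * q j) = p i)
  (Hmin : forall phi, fpot N z ce q phimin <= fpot N z ce q phi)
  (Hneg : fpot N z ce q phimin < 0) :
  exists (V Phi dVA dVQ : R -> R -> R),
    (forall A QA, 0 < A ->
       exists c : nat -> R,
         steady_state N z ce L p A (QA / A) c (V A QA) (Phi A QA) /\
         forall c' v' phi', steady_state N z ce L p A (QA / A) c' v' phi' ->
           (forall k, (k < N)%nat -> c' k = c k) /\ v' = V A QA /\ phi' = Phi A QA) /\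
    (forall A QA, 0 < A ->
       derivable_pt_lim (fun a => V a QA) A (dVA A QA) /\
       derivable_pt_lim (fun b => V A b) QA (dVQ A QA) /\
       continuous2_at dVA A QA /\ continuous2_at dVQ A QA) /\
    (forall A QA, 0 < A ->
       let v := V A QA in
       let f2 := fpot2 N z ce q (Phi A QA) in
       let D := (QA / v) ^ 2 + f2 * (A / v) in
       dVA A QA = / D * f2 /\ 0 < dVA A QA /\
       dVQ A QA = / D * (QA / v)).
Proof.
  set (F := fpot N z ce q). set (F1 := F1c N z ce q). set (F2 := fpot2 N z ce q).
  assert (dF : forall x, derivable_pt_lim F x (F1 x)) by (intro; apply dF_c).
  assert (dF1 : forall x, derivable_pt_lim F1 x (F2 x)) by (intro; apply dF1_c).
  assert (pos2 : forall x, 0 < F2 x) by (intro; apply pos2_c; auto).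
  destruct (signs N z ce Hce Hz Hneutral) as [[k1 [Hk1 Hz1]] [k2 [Hk2 Hz2]]].
  set (S := sumN N ce).
  set (M := Rmax (phimin + 1) ((- q k1 - S / ce k1) / z k1)).
  set (m := Rmin (phimin - 1) ((- q k2 - S / ce k2) / z k2)).
  assert (FM : 0 < F M).
  { apply (Fpos_c N z ce q Hce k1 M Hk1). pose proof (Rmax_r (phimin + 1) ((- q k1 - S / ce k1) / z k1)).
    fold M in H. pose proof (Hce k1 Hk1).
    assert (z k1 * ((- q k1 - S / ce k1) / z k1) = - q k1 - S / ce k1) by (field; lra).
    assert (0 <= (M - (- q k1 - S / ce k1) / z k1) * (- z k1)) by (apply Rmult_le_pos; lra).
    fold S. nra. }
  assert (Fm : 0 < F m).
  { apply (Fpos_c N z ce q Hce k2 m Hk2). pose proof (Rmin_r (phimin - 1) ((- q k2 - S / ce k2) / z k2)).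
    fold m in H. pose proof (Hce k2 Hk2).
    assert (z k2 * ((- q k2 - S / ce k2) / z k2) = - q k2 - S / ce k2) by (field; lra).
    assert (0 <= ((- q k2 - S / ce k2) / z k2 - m) * z k2) by (apply Rmult_le_pos; lra).
    fold S. nra. }
  assert (HM : phimin < M) by (pose proof (Rmax_l (phimin + 1) ((- q k1 - S / ce k1) / z k1)); fold M in H; lra).
  assert (Hm : m < phimin) by (pose proof (Rmin_l (phimin - 1) ((- q k2 - S / ce k2) / z k2)); fold m in H; lra).
  assert (Ex : forall zz, exists phi, F phi < 0 /\ F1 phi / - F phi = zz).
  { intro zz. destruct (exists_sol F F1 F2 dF dF1 pos2 m phimin M Hm HM Fm Hneg FM zz) as [phi [H1 H2]].
    exists phi. split; auto. replace (F1 phi) with (zz * - F phi) by lra. field. lra. }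
  set (Phi := fun zz => proj1_sig (constructive_indefinite_description _ (Ex zz))).
  assert (HP : forall zz, F (Phi zz) < 0 /\ F1 (Phi zz) / - F (Phi zz) = zz).
  { intro zz. exact (proj2_sig (constructive_indefinite_description _ (Ex zz))). }
  clearbody Phi.
  destruct (Phi_props F F1 F2 dF dF1 pos2 Phi HP) as [PH [Mono [Cont Der]]].
  set (Dn := fun t => F1 t * F1 t - F2 t * F t).
  assert (Dpos : forall t, F t < 0 -> 0 < Dn t).
  { intros t Ht. unfold Dn. pose proof (pos2 t). nra. }
  exists (fun A Q => A / - F (Phi (Q / A))), (fun A Q => Phi (Q / A)),
         (fun A Q => F2 (Phi (Q / A)) / Dn (Phi (Q / A))),
         (fun A Q => F1 (Phi (Q / A)) / Dn (Phi (Q / A))).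
  split; [|split].
  - intros A QA HA.
    destruct (HP (QA / A)) as [Hn He]. set (t := Phi (QA / A)) in *.
    assert (E1 : F1 t = QA / A * - F t) by (rewrite <- He; field; lra).
    exists (fun k => ce k * exp (- q k - z k * t)).
    assert (Hmu : forall (c : nat -> R) phi k, (k < N)%nat -> c k = ce k * exp (- q k - z k * phi) ->
               mu z ce c phi k = - q k).
    { intros c phi k Hk Ec. unfold mu. rewrite Ec. pose proof (Hce k Hk).
      replace (ce k * exp (- q k - z k * phi) / ce k) with (exp (- q k - z k * phi)) by (field; lra).
      rewrite ln_exp. ring. }
    assert (Hsz : forall phi, sumN N (fun k => z k * (ce k * exp (- q k - z k * phi))) = - F1 phi).
    { intro phi. unfold F1, F1c. rewrite <- sumN_opp. apply sumN_ext. intros; ring. }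
    assert (Hsc : forall phi, sumN N (fun k => ce k * exp (- q k - z k * phi)) = F phi + S).
    { intro phi. unfold F, S. rewrite fpot_split. ring. }
    split.
    + split; [|split; [|split; [|split]]].
      * intros k Hk. pose proof (Hce k Hk). pose proof (exp_pos (- q k - z k * t)). nra.
      * apply Rdiv_lt_0_compat; lra.
      * rewrite Hsz, E1. field. split; lra.
      * intros i Hi. rewrite (sumN_ext N _ (fun j => - (L i j * q j))).
        -- rewrite sumN_opp, Hq; auto. ring.
        -- intros j Hj. rewrite (Hmu _ t j Hj) by reflexivity. ring.
      * unfold piw. rewrite Hsc. fold S. field. lra.
    + intros c' v' phi' [Hc' [Hv' [Hneu [HL Hpi]]]].
      set (x := fun k => mu z ce c' phi' k + q k).
      assert (Lx : forall i, (i < N)%nat -> sumN N (fun j => L i j * x j) = 0).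
      { intros i Hi. rewrite (sumN_ext N _ (fun j => L i j * mu z ce c' phi' j + L i j * q j)).
        - rewrite sumN_plus, Hq by auto. pose proof (HL i Hi). lra.
        - intros; unfold x; ring. }
      assert (x0 : forall i, (i < N)%nat -> x i = 0).
      { intros i Hi. destruct (Req_dec (x i) 0) as [|Hne]; auto. exfalso.
        assert (P := HLpd x (ex_intro _ i (conj Hi Hne))).
        rewrite (sumN_ext N _ (fun i => x i * sumN N (fun j => L i j * x j))) in P.
        - rewrite (sumN_ext N _ (fun i => 0 * x i)) in P.
          + rewrite sumN_scal in P. lra.
          + intros k Hk. rewrite Lx; auto; ring.
        - intros k Hk. rewrite <- sumN_scal. apply sumN_ext. intros; ring. }
      assert (Ec : forall k, (k < N)%nat -> c' k = ce k * exp (- q k - z k * phi')).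
      { intros k Hk. pose proof (x0 k Hk) as X. unfold x, mu in X. pose proof (Hce k Hk). pose proof (Hc' k Hk).
        replace (- q k - z k * phi') with (ln (c' k / ce k)) by lra. rewrite exp_ln.
        - field. lra.
        - apply Rdiv_lt_0_compat; lra. }
      assert (Sc : sumN N c' = F phi' + S) by (rewrite <- Hsc; apply sumN_ext; auto).
      assert (Sz : sumN N (fun k => z k * c' k) = - F1 phi').
      { rewrite <- Hsz. apply sumN_ext. intros k Hk. rewrite Ec; auto. }
      unfold piw in Hpi. rewrite Sc in Hpi. fold S in Hpi.
      assert (Av : A / v' = - F phi') by lra.
      assert (Fn : F phi' < 0) by (assert (0 < A / v') by (apply Rdiv_lt_0_compat; lra); lra).
      rewrite Sz in Hneu.
      assert (Hh : F1 phi' / - F phi' = QA / A).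
      { rewrite <- Av. replace (F1 phi') with (QA / A * A / v') by lra. field. split; lra. }
      assert (Ep : phi' = t). { unfold t. rewrite <- Hh. symmetry. apply PH; auto. }
      split; [|split]; auto.
      * intros k Hk. rewrite Ec, Ep; auto.
      * rewrite <- Ep, <- Av. field. split; lra.
  - intros A QA HA.
    destruct (HP (QA / A)) as [Hn He]. pose proof (Der (QA / A)) as DP.
    set (t := Phi (QA / A)) in *.
    assert (E1 : F1 t = QA / A * - F t) by (rewrite <- He; field; lra).
    pose proof (Dpos t Hn) as Dp. pose proof (pos2 t) as P2.
    assert (Fne : F t <> 0) by lra.
    assert (Dne : Dn t <> 0) by lra.
    assert (Hdne : F2 t * - F t + F1 t * F1 t <> 0) by (unfold Dn in Dp; lra).
    split; [|split; [|split]].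
    + pose proof (d_Q_over QA A ltac:(lra)) as D1.
      pose proof (d_comp2 (fun a => QA / a) Phi A _ _ D1 DP) as D2.
      pose proof (d_comp2 (fun a => Phi (QA / a)) F A _ _ D2 (dF _)) as D3.
      pose proof (d_id_over (fun a => F (Phi (QA / a))) A _ D3 Fne) as D4.
      cbv beta in D4. fold t in D4.
      match type of D4 with derivable_pt_lim _ _ ?v =>
        replace v with (F2 t / Dn t) in D4 end; [exact D4|].
      unfold Dn. replace QA with (- A * F1 t / F t) by (rewrite E1; field; split; lra).
      field. unfold Dn in Dne. repeat split; auto; lra.
    + pose proof (d_over_A A QA ltac:(lra)) as D1.
      pose proof (d_comp2 (fun b => b / A) Phi QA _ _ D1 DP) as D2.
      pose proof (d_comp2 (fun b => Phi (b / A)) F QA _ _ D2 (dF _)) as D3.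
      pose proof (d_K_over (fun b => F (Phi (b / A))) QA _ A D3 Fne) as D4.
      cbv beta in D4. fold t in D4.
      match type of D4 with derivable_pt_lim _ _ ?v =>
        replace v with (F1 t / Dn t) in D4 end; [exact D4|].
      unfold Dn. field. unfold Dn in Dne. repeat split; auto; lra.
    + assert (CF : forall u, continuity_pt F u) by (intro u; apply derivable_continuous_pt; exists (F1 u); apply dF).
      assert (CF1 : forall u, continuity_pt F1 u) by (intro u; apply derivable_continuous_pt; exists (F2 u); apply dF1).
      assert (CF2 : forall u, continuity_pt F2 u) by (intro u; apply derivable_continuous_pt; eexists; apply dF2_c).
      apply (cont2_comp (fun s => F2 (Phi s) / Dn (Phi s))); auto.
      apply (continuity_pt_comp Phi (fun u => F2 u / Dn u)); auto.
      apply (test_cont F1 F2 F); auto.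
    + assert (CF : forall u, continuity_pt F u) by (intro u; apply derivable_continuous_pt; exists (F1 u); apply dF).
      assert (CF1 : forall u, continuity_pt F1 u) by (intro u; apply derivable_continuous_pt; exists (F2 u); apply dF1).
      assert (CF2 : forall u, continuity_pt F2 u) by (intro u; apply derivable_continuous_pt; eexists; apply dF2_c).
      apply (cont2_comp (fun s => F1 (Phi s) / Dn (Phi s))); auto.
      apply (continuity_pt_comp Phi (fun u => F1 u / Dn u)); auto.
      apply continuity_pt_div; auto. unfold Dn.
      apply continuity_pt_minus; apply continuity_pt_mult; auto.
  - intros A QA HA. cbv zeta.
    destruct (HP (QA / A)) as [Hn He]. set (t := Phi (QA / A)) in *.
    pose proof (Dpos t Hn). pose proof (pos2 t).
    assert (E1 : F1 t = QA / A * - F t) by (rewrite <- He; field; lra).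
    assert (ED : (QA / (A / - F t)) ^ 2 + F2 t * (A / (A / - F t)) = Dn t).
    { unfold Dn. rewrite E1. field. lra. }
    rewrite ED. split; [|split].
    + field. lra.
    + apply Rdiv_lt_0_compat; lra.
    + rewrite E1 at 1. field. split; lra.
Qed.
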